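(* Let $(V,E)$ be a graph with $k$ cliques and $\ell$ cocliques. Then there is a UFA with $|V|$ states whose forward determinization has at least $k$ states and whose backward determinization has at least $\ell$ states.
   Context: A graph is a finite simple undirected graph $(V,E)$. A clique is a set $X\subseteq V$ with every two distinct vertices adjacent; a coclique is a set $Y\subseteq V$ with no two distinct vertices adjacent (the empty set counts as both). A UFA is an NFA $(Q,\Sigma,\delta,I,F)$ (finite states, finite alphabet, transitions $\delta\subseteq Q\times\Sigma\times Q$, initial states $I$, accepting states $F$) in which every word has at most one accepting run. For $S\subseteq Q$, $w\in\Sigma^*$: $\delta(S,w)=\{r\mid\exists q\in S.\ q\xrightarrow{w}r\}$, $\delta^{-1}(w,S)=\{r\mid \exists q\in S.\ r\xrightarrow{w} q\}$. The forward determinization has state set $\{\delta(I,w)\mid w\in\Sigma^*\}$; the backward determinization has state set $\{\delta^{-1}(w,F)\mid w\in\Sigma^*\}$. *)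

(* Defs.v *)
From mathcomp Require Import all_boot.
From mathcomp Require Import boolp.
Set Implicit Arguments. Unset Strict Implicit. Unset Printing Implicit Defensive.

Definition simple_graph (T : finType) (e : rel T) : Prop :=
  symmetric e /\ irreflexive e.

Definition is_clique (T : finType) (e : rel T) (X : {set T}) : bool :=
  [forall x in X, forall y in X, (x != y) ==> e x y].

Definition is_coclique (T : finType) (e : rel T) (Y : {set T}) : bool :=
  [forall x in Y, forall y in Y, (x != y) ==> ~~ e x y].

Definition cliques (T : finType) (e : rel T) : {set {set T}} :=
  [set X | is_clique e X].
Definition cocliques (T : finType) (e : rel T) : {set {set T}} :=
  [set Y | is_coclique e Y].

Record nfa (Q Sigma : finType) := Nfa {
  trans : Q -> Sigma -> Q -> bool;
  init  : {set Q};
  final : {set Q} }.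

Section NFA.
Variables (Q Sigma : finType) (A : nfa Q Sigma).

(* q0 :: r is a run on w starting at q0 *)
Fixpoint run_from (q : Q) (w : seq Sigma) (r : seq Q) : bool :=
  match w, r with
  | [::], [::] => true
  | a :: w', q' :: r' => trans A q a q' && run_from q' w' r'
  | _, _ => false
  end.

Definition accepting_run (w : seq Sigma) (q0 : Q) (r : seq Q) : bool :=
  [&& q0 \in init A, run_from q0 w r & last q0 r \in final A].

Definition unambiguous : Prop :=
  forall w q0 r q0' r', accepting_run w q0 r -> accepting_run w q0' r' ->
    q0 :: r = q0' :: r'.

Fixpoint path_to (q : Q) (w : seq Sigma) (p : Q) : bool :=
  match w with
  | [::] => q == p
  | a :: w' => [exists q', trans A q a q' && path_to q' w' p]
  end.

Definition delta (S : {set Q}) (w : seq Sigma) : {set Q} :=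
  [set p | [exists q in S, path_to q w p]].
Definition delta_inv (w : seq Sigma) (S : {set Q}) : {set Q} :=
  [set p | [exists q in S, path_to p w q]].

Definition fwd_det_states : {set {set Q}} :=
  [set S | `[< exists w : seq Sigma, S = delta (init A) w >]].
Definition bwd_det_states : {set {set Q}} :=
  [set S | `[< exists w : seq Sigma, S = delta_inv w (final A) >]].
End NFA.

(* Main.v *)
Require Import Defs.
From mathcomp Require Import all_boot.
From mathcomp Require Import boolp.
Set Implicit Arguments. Unset Strict Implicit. Unset Printing Implicit Defensive.

Section Constr.
Variables (T : finType) (e : rel T) (v0 : T).

Definition ctrans (q : T) (a : prod bool {set T}) (p : T) : bool :=
  if a.1 then (q == v0) && is_clique e a.2 && (p \in a.2)
  else is_coclique e a.2 && (q \in a.2) && (p == v0).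

Definition cA : nfa T (prod bool {set T}) := Nfa ctrans [set v0] [set v0].

Lemma L1 w q q' r r' :
  run_from cA q w r -> last q r \in final cA ->
  run_from cA q' w r' -> last q' r' \in final cA ->
  q != q' -> ~~ e q q'.
Proof.
case: w => [|[[] X] w] /=.
- case: r => [|? ?] //; case: r' => [|? ?] //= _; rewrite !inE => /eqP -> _ /eqP ->.
  by rewrite eqxx.
- case: r => // p r; case: r' => // p' r'.
  rewrite /ctrans /= => /andP[/andP[/andP[/eqP -> _] _] _] _.
  move=> /andP[/andP[/andP[/eqP -> _] _] _] _; by rewrite eqxx.
- case: r => // p r; case: r' => // p' r'.
  rewrite /ctrans /= => /andP[/andP[/andP[cY qY] _] _] _.
  move=> /andP[/andP[/andP[_ qY'] _] _] _ nq.
  by move/forallP: cY => /(_ q) /implyP /(_ qY) /forallP /(_ q')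
     /implyP /(_ qY') /implyP /(_ nq).
Qed.

Lemma L2 q a p p' : ctrans q a p -> ctrans q a p' -> (p == p') || e p p'.
Proof.
rewrite /ctrans; case: a => [[] X] /=.
- move=> /andP[/andP[_ cX] pX] /andP[_ pX'].
  case: eqP => //= /eqP np.
  by move/forallP: cX => /(_ p) /implyP /(_ pX) /forallP /(_ p')
     /implyP /(_ pX') /implyP /(_ np).
- by move=> /andP[_ /eqP ->] /andP[_ /eqP ->]; rewrite eqxx.
Qed.

Lemma L3 w : forall q q' r r', (q == q') || e q q' ->
  run_from cA q w r -> last q r \in final cA ->
  run_from cA q' w r' -> last q' r' \in final cA ->
  q :: r = q' :: r'.
Proof.
elim: w => [|a w IH] q q' r r' hqq h1 h2 h3 h4.
- have eq : q = q'.
    case: eqP hqq => //= /eqP nq he.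
    by move: (L1 h1 h2 h3 h4 nq); rewrite he.
  by move: h1 h2 h3 h4; case: r => [|? ?] //; case: r' => [|? ?] //; rewrite eq.
- have eq : q = q'.
    case: eqP hqq => //= /eqP nq he.
    by move: (L1 h1 h2 h3 h4 nq); rewrite he.
  subst q'.
  move: h1 h2 h3 h4; case: r => // p r; case: r' => // p' r' /=.
  move=> /andP[t1 h1] h2 /andP[t2 h3] h4.
  by have := IH p p' r r' (L2 t1 t2) h1 h2 h3 h4 => [[-> ->]].
Qed.

End Constr.

Theorem lemma3 (T : finType) (e : rel T) (k l : nat) :
  simple_graph e ->
  #|cliques e| = k -> #|cocliques e| = l ->
  exists (Q Sigma : finType) (A : nfa Q Sigma),
    [/\ unambiguous A, #|Q| = #|T|,
        k <= #|fwd_det_states A| & l <= #|bwd_det_states A|].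
Proof.
move=> _ <- <-.
case: (pickP (fun _ : T => true)) => [v0 _ | Hn].
- exists T, (prod bool {set T} : finType), (cA e v0); split => //.
  + move=> w q0 r q0' r' /and3P[i1 h1 f1] /and3P[i2 h2 f2].
    apply: (L3 _ h1 f1 h2 f2).
    by move: i1 i2; rewrite /= !inE => /eqP -> /eqP ->; rewrite eqxx.
  + apply: subset_leq_card; apply/subsetP => X; rewrite !inE => cX.
    apply/asboolP; exists [:: (true, X)]; apply/setP => p; rewrite inE.
    apply/idP/existsP.
    * move=> pX; exists v0; rewrite inE eqxx /=; apply/existsP; exists p.
      by rewrite /ctrans /= !eqxx cX pX.
    * case=> q /andP[]; rewrite inE => /eqP -> /existsP[q'].
      by rewrite /ctrans /= => /andP[/andP[_ ?] /eqP <-].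
  + apply: subset_leq_card; apply/subsetP => X; rewrite !inE => cX.
    apply/asboolP; exists [:: (false, X)]; apply/setP => p; rewrite inE.
    apply/idP/existsP.
    * move=> pX; exists v0; rewrite inE eqxx /=; apply/existsP; exists v0.
      by rewrite /ctrans /= cX pX !eqxx.
    * case=> q /andP[] _ /existsP[q'].
      by rewrite /ctrans /= => /andP[/andP[/andP[_ ?] _] _].
- exists T, (unit : finType), (Nfa (fun _ _ _ => false) set0 set0); split => //.
  + by move=> w q0; have := Hn q0.
  + apply: subset_leq_card; apply/subsetP => X _; rewrite inE.
    apply/asboolP; exists [::]; apply/setP => x; by have := Hn x.
  + apply: subset_leq_card; apply/subsetP => X _; rewrite inE.
    apply/asboolP; exists [::]; apply/setP => x; by have := Hn x.
Qed.
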